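(* Let $D$ be a division algebra and let $\sigma_1,\ldots,\sigma_n$ be pairwise commuting automorphisms of $D$ such that $F=\mathcal{Z}(D)\cap\bigl(\bigcap_{i=1}^n D_{\sigma_i}\bigr)$ is infinite. If $\sigma_1^{d_1}=\cdots=\sigma_n^{d_n}$ for some positive integers $d_1,\ldots,d_n$, then the tuple $(\sigma_1,\ldots,\sigma_n)$ is automorphically normalizable over $D$. In particular, if $\sigma_1,\ldots,\sigma_n$ are of finite orders, then the tuple $(\sigma_1,\ldots,\sigma_n)$ is centrally normalizable over $D$.
   Context: All rings are associative with unity. $\mathcal{Z}(D)$ is the center of $D$ and $D_{\sigma}=\{r\in D:\sigma(r)=r\}$. For commuting automorphisms $\sigma_1,\ldots,\sigma_n$ of $D$, $D[t_1,\ldots,t_n;\sigma_1,\ldots,\sigma_n]$ denotes the skew polynomial ring in pairwise commuting variables with $t_ia=\sigma_i(a)t_i$ for $a\in D$. For a ring $S\supseteq D$, $a\in S$ is automorphic over $D$ with respect to $\tau\in\mathrm{Aut}(D)$ if $ab=\tau(b)a$ for all $b\in D$. $S$ is finite over a subring $R$ if finitely generated as a left $R$-module. Commuting $a_1,\ldots,a_m\in S$ are (left) algebraically independent over $D$ if the monomials in them are left linearly independent over $D$. $S$ is automorphically normalizable over $D$ if there exist $m\ge0$ and commuting $a_1,\ldots,a_m\in S$, automorphic over $D$ with respect to pairwise commuting automorphisms $\tau_1,\ldots,\tau_m$, left algebraically independent over $D$, with $S$ finite over the subring $D[a_1,\ldots,a_m]$ generated by $D\cup\{a_1,\ldots,a_m\}$;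 it is centrally normalizable if moreover the $\tau_i$ can be taken to be $\mathrm{id}_D$. A tuple $(\sigma_1,\ldots,\sigma_n)$ is automorphically (resp. centrally) normalizable over $D$ if every quotient of $D[t_1,\ldots,t_n;\sigma_1,\ldots,\sigma_n]$ by a proper two-sided ideal is automorphically (resp. centrally) normalizable over $D$. *)

(* Defs.v *)
(* with multinomials' mpoly used as the additive carrier of
   skew polynomial rings D[t_1,...,t_n; sigma_1,...,sigma_n]. *)
From HB Require Import structures.
From mathcomp Require Import all_boot all_order all_algebra.
From mathcomp Require Import mpoly.
Set Implicit Arguments. Unset Strict Implicit. Unset Printing Implicit Defensive.
Import Order.TTheory GRing.Theory.
Local Open Scope ring_scope.

Definition is_division_ring (D : unitRingType) : Prop :=
  forall x : D, x != 0 -> x \is a GRing.unit.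

Definition is_ring_aut (D : unitRingType) (s : {rmorphism D -> D}) : Prop :=
  bijective s.

Definition pairwise_commuting (D : Type) (k : nat) (s : 'I_k -> D -> D) : Prop :=
  forall i j x, s i (s j x) = s j (s i x).

Definition sigma_mon (D : Type) (n : nat) (s : 'I_n -> D -> D)
    (al : 'X_{1..n}) : D -> D :=
  foldr (fun i f => (iter (al i) (s i)) \o f) id (enum 'I_n).

(* Multiplication of D[t_1..t_n; s_1..s_n] on the underlying left D-module of
   polynomials {mpoly D[n]}: (a t^al)(b t^be) = a s^al(b) t^(al+be). *)
Definition skew_mul (D : unitRingType) (n : nat) (s : 'I_n -> D -> D)
    (p q : {mpoly D[n]}) : {mpoly D[n]} :=
  \sum_(al <- msupp p) \sum_(be <- msupp q)
     (p@_al * sigma_mon s al (q@_be)) *: 'X_[(al + be)%MM].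

Definition proper_twosided_ideal (D : unitRingType) (n : nat)
    (s : 'I_n -> D -> D) (I : {mpoly D[n]} -> Prop) : Prop :=
  [/\ I 0,
      forall x y, I x -> I y -> I (x - y),
      forall r x, I x -> I (skew_mul s r x),
      forall r x, I x -> I (skew_mul s x r)
    & ~ I 1].

(* The quotient S = D[t; s] / I is handled through representatives:
   elements of S are classes of elements of D[t;s], x = y in S iff I (x - y),
   and D sits in S as the classes of constant polynomials c%:MP. *)

Definition skew_monomial (D : unitRingType) (n m : nat) (s : 'I_n -> D -> D)
    (a : 'I_m -> {mpoly D[n]}) (be : 'X_{1..m}) : {mpoly D[n]} :=
  foldr (fun i r => skew_mul s (iter (be i) (skew_mul s (a i)) 1) r) 1 (enum 'I_m).

(* subring of D[t;s] generated by D (constants) and a_1..a_m; its image in S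
   is the subring of S generated by D and the classes of the a_i. *)
Inductive gen_subring (D : unitRingType) (n m : nat) (s : 'I_n -> D -> D)
    (a : 'I_m -> {mpoly D[n]}) : {mpoly D[n]} -> Prop :=
  | gen_const (c : D) : gen_subring s a c%:MP
  | gen_var (i : 'I_m) : gen_subring s a (a i)
  | gen_add x y : gen_subring s a x -> gen_subring s a y -> gen_subring s a (x + y)
  | gen_opp x : gen_subring s a x -> gen_subring s a (- x)
  | gen_mul x y : gen_subring s a x -> gen_subring s a y ->
                  gen_subring s a (skew_mul s x y).

Definition normalizable_quot (central : bool) (D : unitRingType) (n : nat)
    (s : 'I_n -> D -> D) (I : {mpoly D[n]} -> Prop) : Prop :=
  exists (m : nat) (a : 'I_m -> {mpoly D[n]}) (tau : 'I_m -> {rmorphism D -> D}),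
    [/\
        (forall i, is_ring_aut (tau i)) /\
        pairwise_commuting (fun i => (tau i : D -> D)),
        (central -> forall i x, tau i x = x),
        (forall i j, I (skew_mul s (a i) (a j) - skew_mul s (a j) (a i))) /\
        (forall i (b : D), I (skew_mul s (a i) b%:MP - skew_mul s (tau i b)%:MP (a i))),
        (* left algebraic independence over D: the monomials a^be are left
           linearly independent over D in S *)
        (forall P : {mpoly D[m]},
            I (\sum_(be <- msupp P) skew_mul s (P@_be)%:MP (skew_monomial s a be)) ->
            P = 0)
      & (* S finitely generated as a left module over the subring D[a_1..a_m] *)
        exists (k : nat) (r : 'I_k -> {mpoly D[n]}),
          forall x : {mpoly D[n]}, exists t : 'I_k -> {mpoly D[n]},
            (forall j, gen_subring s a (t j)) /\
            I (x - \sum_(j < k) skew_mul s (t j) (r j))].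

Definition automorphically_normalizable_quot := normalizable_quot false.
Definition centrally_normalizable_quot := normalizable_quot true.

Definition tuple_aut_normalizable (D : unitRingType) (n : nat)
    (s : 'I_n -> D -> D) : Prop :=
  forall I, proper_twosided_ideal s I -> automorphically_normalizable_quot s I.

Definition tuple_central_normalizable (D : unitRingType) (n : nat)
    (s : 'I_n -> D -> D) : Prop :=
  forall I, proper_twosided_ideal s I -> centrally_normalizable_quot s I.

Definition fixed_center (D : unitRingType) (n : nat) (s : 'I_n -> D -> D)
    (x : D) : Prop :=
  (forall y : D, x * y = y * x) /\ (forall i, s i x = x).

Definition infinite_pred (T : eqType) (P : T -> Prop) : Prop :=
  ~ exists l : seq T, forall x, P x -> x \in l.

(* Main.v *)
Require Import Defs.
From HB Require Import structures.
From mathcomp Require Import all_boot all_order all_algebra.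
From mathcomp Require Import mpoly.
From Stdlib Require Import Classical ClassicalEpsilon.
From mathcomp Require Import zify.
Set Implicit Arguments. Unset Strict Implicit. Unset Printing Implicit Defensive.
Import Order.TTheory GRing.Theory.
Local Open Scope ring_scope.

Lemma iter_rmD (D : pzRingType) (f : {rmorphism D -> D}) k x y :
  iter k f (x + y) = iter k f x + iter k f y.
Proof. by elim: k => //= k ->; rewrite rmorphD. Qed.
Lemma iter_rmM (D : pzRingType) (f : {rmorphism D -> D}) k x y :
  iter k f (x * y) = iter k f x * iter k f y.
Proof. by elim: k => //= k ->; rewrite rmorphM. Qed.
Lemma iter_rmN (D : pzRingType) (f : {rmorphism D -> D}) k x :
  iter k f (- x) = - iter k f x.
Proof. by elim: k => //= k ->; rewrite rmorphN. Qed.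
Lemma iter_rm0 (D : pzRingType) (f : {rmorphism D -> D}) k :
  iter k f 0 = 0.
Proof. by elim: k => //= k ->; rewrite rmorph0. Qed.
Lemma iter_rm1 (D : pzRingType) (f : {rmorphism D -> D}) k :
  iter k f 1 = 1.
Proof. by elim: k => //= k ->; rewrite rmorph1. Qed.

Section Skew.
Variable D : unitRingType.
Variable n : nat.
Variable sigma : 'I_n -> {rmorphism D -> D}.
Hypothesis Hc : pairwise_commuting (fun i => (sigma i : D -> D)).
Local Notation s := (fun i => (sigma i : D -> D)).

Definition fm (l : seq 'I_n) (al : 'X_{1..n}) : D -> D :=
  foldr (fun i f => (iter (al i) (s i)) \o f) id l.

Lemma smE al : sigma_mon s al = fm (enum 'I_n) al. Proof. by []. Qed.

Lemma fmD l al x y : fm l al (x + y) = fm l al x + fm l al y.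
Proof. by elim: l => //= i l IH; rewrite IH iter_rmD. Qed.
Lemma fmM l al x y : fm l al (x * y) = fm l al x * fm l al y.
Proof. by elim: l => //= i l IH; rewrite IH iter_rmM. Qed.
Lemma fmN l al x : fm l al (- x) = - fm l al x.
Proof. by elim: l => //= i l IH; rewrite IH iter_rmN. Qed.
Lemma fm0 l al : fm l al 0 = 0.
Proof. by elim: l => //= i l IH; rewrite IH iter_rm0. Qed.
Lemma fm1 l al : fm l al 1 = 1.
Proof. by elim: l => //= i l IH; rewrite IH iter_rm1. Qed.

Lemma iter_comm (f g : D -> D) k x : (forall y, f (g y) = g (f y)) ->
  iter k f (g x) = g (iter k f x).
Proof. by move=> H; elim: k => //= k ->; rewrite H. Qed.

Lemma fm_comm l al (g : D -> D) x : (forall i y, s i (g y) = g (s i y)) ->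
  fm l al (g x) = g (fm l al x).
Proof.
move=> H; elim: l => //= i l IH; rewrite IH; apply: iter_comm => y; exact: H.
Qed.

Lemma fm_addm l al be x : fm l (al + be)%MM x = fm l al (fm l be x).
Proof.
elim: l => //= i l IH; rewrite IH mnmDE iterD.
congr (iter _ _ _).
rewrite (@fm_comm l al (iter (be i) (s i))) //.
by move=> j y; rewrite (iter_comm (be i) y (g:=s j)) // => z; rewrite Hc.
Qed.

Lemma fm_mnm0 l x : fm l 0%MM x = x.
Proof. by elim: l => //= i l IH; rewrite IH mnm0E. Qed.

Lemma fm_fix l al c : (forall i, s i c = c) -> fm l al c = c.
Proof.
move=> H; elim: l => //= i l ->.
by elim: (al i) => //= k ->; rewrite H.
Qed.

Lemma fm_single l j k x : fm l (U_(j) *+ k)%MM x = iter (k * count_mem j l) (s j) x.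
Proof.
elim: l => [|i l IH] /=; first by rewrite muln0.
rewrite IH mulmnE mnm1E.
case: (eqVneq i j) => [->|ne] /=.
  by rewrite mul1n -iterD mulnDr muln1 addnC.
by rewrite add0n.
Qed.

Local Notation sm := (skew_mul s).

Lemma big_sup (T : eqType) (V : nmodType) (A B : seq T) (F : T -> V) :
  uniq A -> uniq B -> {subset B <= A} -> (forall x, x \in A -> x \notin B -> F x = 0) ->
  \sum_(x <- A) F x = \sum_(x <- B) F x.
Proof.
move=> uA uB sBA H.
rewrite (bigID (fun x => x \in B)) /= [X in _ + X]big1_seq ?addr0; last first.
  by move=> x /andP[xB xA]; apply: H.
rewrite -big_filter; apply: perm_big.
apply: uniq_perm; first exact: filter_uniq. exact uB.
by move=> x; rewrite mem_filter; case: (boolP (x \in B)) => // /sBA ->.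
Qed.

Lemma smul_sup (p q : {mpoly D[n]}) A B : uniq A -> uniq B ->
  {subset msupp p <= A} -> {subset msupp q <= B} ->
  sm p q = \sum_(al <- A) \sum_(be <- B)
     (p@_al * sigma_mon s al (q@_be)) *: 'X_[(al + be)%MM].
Proof.
move=> uA uB sA sB; rewrite /skew_mul -(big_sup uA (msupp_uniq p) sA); last first.
  by move=> al _ /memN_msupp_eq0 ->; rewrite big1 // => be _; rewrite mul0r scale0r.
apply: eq_bigr => al _.
rewrite -(big_sup uB (msupp_uniq q) sB) // => be _ /memN_msupp_eq0 ->.
by rewrite smE fm0 mulr0 scale0r.
Qed.

Lemma sub_undup3 (T : eqType) (a b c : seq T) :
  [/\ {subset a <= undup (a ++ b ++ c)}, {subset b <= undup (a ++ b ++ c)}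
    & {subset c <= undup (a ++ b ++ c)}].
Proof. by split => x hx; rewrite mem_undup !mem_cat hx ?orbT. Qed.

Lemma smulDl p p' q : sm (p + p') q = sm p q + sm p' q.
Proof.
have [h1 h2 h3] := sub_undup3 (msupp p) (msupp p') (msupp (p + p')).
have u := undup_uniq (msupp p ++ msupp p' ++ msupp (p + p')).
rewrite (smul_sup u (msupp_uniq q) h3) // (smul_sup u (msupp_uniq q) h1) //.
rewrite (smul_sup u (msupp_uniq q) h2) // -big_split; apply: eq_bigr => al _.
rewrite -big_split; apply: eq_bigr => be _.
by rewrite mcoeffD mulrDl scalerDl.
Qed.

Lemma smulDr p q q' : sm p (q + q') = sm p q + sm p q'.
Proof.
have [h1 h2 h3] := sub_undup3 (msupp q) (msupp q') (msupp (q + q')).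
have u := undup_uniq (msupp q ++ msupp q' ++ msupp (q + q')).
rewrite (smul_sup (msupp_uniq p) u _ h3) // (smul_sup (msupp_uniq p) u _ h1) //.
rewrite (smul_sup (msupp_uniq p) u _ h2) // -big_split; apply: eq_bigr => al _.
rewrite -big_split; apply: eq_bigr => be _.
by rewrite mcoeffD smE fmD mulrDr scalerDl.
Qed.

Lemma msupp0' : msupp (0 : {mpoly D[n]}) = [::].
Proof. by apply/eqP; rewrite msupp_eq0. Qed.

Lemma smul0l q : sm 0 q = 0.
Proof. by rewrite /skew_mul msupp0' big_nil. Qed.

Lemma smul0r p : sm p 0 = 0.
Proof. by rewrite /skew_mul msupp0'; apply: big1 => al _; rewrite big_nil. Qed.

Lemma smul_suml (I : Type) (r : seq I) (F : I -> {mpoly D[n]}) q :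
  sm (\sum_(i <- r) F i) q = \sum_(i <- r) sm (F i) q.
Proof. exact: (big_morph (fun p => sm p q) (fun p p' => smulDl p p' q) (smul0l q)). Qed.

Lemma smul_sumr (I : Type) (r : seq I) (F : I -> {mpoly D[n]}) p :
  sm p (\sum_(i <- r) F i) = \sum_(i <- r) sm p (F i).
Proof. exact: (big_morph (fun q => sm p q) (fun q q' => smulDr p q q') (smul0r p)). Qed.

Lemma msuppZX (a : D) al : {subset msupp (a *: 'X_[al] : {mpoly D[n]}) <= [:: al]}.
Proof. by move=> x /msuppZ_le; rewrite msuppX. Qed.

Lemma smul_mono a b al be :
  sm (a *: 'X_[al]) (b *: 'X_[be]) = (a * sigma_mon s al b) *: 'X_[(al + be)%MM].
Proof.
rewrite (smul_sup (A := [:: al]) (B := [:: be])) //; try exact: msuppZX.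
by rewrite !big_seq1 !mcoeffZ !mcoeffX !eqxx !mulr1.
Qed.

Lemma smul_expl p q : sm p q = \sum_(al <- msupp p) sm (p@_al *: 'X_[al]) q.
Proof. by rewrite {1}(mpolyE p) (smul_suml _ (fun m => p@_m *: 'X_[m])). Qed.

Lemma smul_expr p q : sm p q = \sum_(be <- msupp q) sm p (q@_be *: 'X_[be]).
Proof. by rewrite {1}(mpolyE q) (smul_sumr _ (fun m => q@_m *: 'X_[m])). Qed.

Lemma smulA_mono a al q r : sm (a *: 'X_[al]) (sm q r) = sm (sm (a *: 'X_[al]) q) r.
Proof.
rewrite (smul_expl q r) (smul_expr (a *: 'X_[al]) q).
rewrite (smul_sumr _ (fun be => sm (q@_be *: 'X_[be]) r)).
rewrite (smul_suml _ (fun be => sm (a *: 'X_[al]) (q@_be *: 'X_[be]))).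
apply: eq_bigr => be _.
rewrite (smul_expr (q@_be *: 'X_[be]) r) (smul_expr _ r).
rewrite (smul_sumr _ (fun ga => sm (q@_be *: 'X_[be]) (r@_ga *: 'X_[ga]))).
apply: eq_bigr => ga _.
by rewrite !smul_mono !smE fmM fm_addm mulrA addmA.
Qed.

Lemma smulA : associative sm.
Proof.
move=> p q r; rewrite (smul_expl p (sm q r)) (smul_expl p q).
rewrite (smul_suml _ (fun al => sm (p@_al *: 'X_[al]) q)).
apply: eq_bigr => al _; exact: smulA_mono.
Qed.

Lemma one_mono : (1 : {mpoly D[n]}) = 1 *: 'X_[0%MM].
Proof. by rewrite scale1r mpolyX0. Qed.

Lemma smul1l : left_id 1 sm.
Proof.
move=> p; rewrite smul_expr [in RHS](mpolyE p); apply: eq_bigr => al _.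
by rewrite one_mono smul_mono smE fm_mnm0 mul1r add0m.
Qed.

Lemma smul1r : right_id 1 sm.
Proof.
move=> p; rewrite smul_expl [in RHS](mpolyE p); apply: eq_bigr => al _.
by rewrite one_mono smul_mono smE fm1 mulr1 addm0.
Qed.

Definition SR of pairwise_commuting (fun i => (sigma i : D -> D)) : Type := {mpoly D[n]}.
HB.instance Definition _ := GRing.Zmodule.on (SR Hc).
HB.instance Definition _ := GRing.Zmodule_isNzRing.Build (SR Hc) smulA smul1l smul1r
   smulDl smulDr (oner_neq0 {mpoly D[n]}).

Lemma SRmulE (p q : SR Hc) : p * q = sm p q. Proof. by []. Qed.

End Skew.

Section T.
Variable D : unitRingType.
Fixpoint rpow (f : {rmorphism D -> D}) (k : nat) : {rmorphism D -> D} :=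
  match k with 0 => (idfun : {rmorphism D -> D}) | k.+1 => (f \o rpow f k : {rmorphism D -> D}) end.
Lemma rpowE f k x : rpow f k x = iter k f x.
Proof. by elim: k => //= k <-. Qed.
End T.

Section Basics.
Variable D : unitRingType.
Variable n : nat.
Variable sigma : 'I_n -> {rmorphism D -> D}.
Hypothesis Hc : pairwise_commuting (fun i => (sigma i : D -> D)).
Local Notation s := (fun i => (sigma i : D -> D)).
Local Notation R := (SR Hc).
Local Notation sm := (skew_mul s).
Definition C (c : D) : R := c%:MP.

Lemma Cmono c : (c%:MP : {mpoly D[n]}) = c *: 'X_[0%MM].
Proof. by rewrite mpolyX0 -mul_mpolyC mulr1. Qed.

Lemma CM a b : C (a * b) = C a * C b.
Proof. by rewrite SRmulE /C !Cmono smul_mono smE fm_mnm0 addm0. Qed.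
Lemma CD a b : C (a + b) = C a + C b. Proof. exact: mpolyCD. Qed.
Lemma CN a : C (- a) = - C a. Proof. exact: mpolyCN. Qed.
Lemma CB a b : C (a - b) = C a - C b. Proof. exact: mpolyCB. Qed.
Lemma C0 : C 0 = 0. Proof. exact: mpolyC0. Qed.
Lemma C1 : C 1 = 1. Proof. by []. Qed.

Lemma CmulZ c (p : R) : C c * p = (c *: (p : {mpoly D[n]}) : R).
Proof.
rewrite SRmulE smul_expr [in RHS](mpolyE p) scaler_sumr; apply: eq_bigr => be _.
by rewrite /C Cmono smul_mono smE fm_mnm0 add0m scalerA.
Qed.

Lemma XmulX al be : ('X_[al] : R) * 'X_[be] = 'X_[(al + be)%MM].
Proof.
by rewrite SRmulE -[X in sm X _]scale1r -[X in sm _ X]scale1r smul_mono smE fm1 mulr1 scale1r.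
Qed.

Lemma XmulC al b : ('X_[al] : R) * C b = C (sigma_mon s al b) * 'X_[al].
Proof.
rewrite CmulZ SRmulE /C Cmono -[X in sm X _]scale1r smul_mono mul1r addm0.
by [].
Qed.

Lemma mulC_fix c (p : R) : fixed_center s c -> p * C c = C c * p.
Proof.
move=> [cc cf]; rewrite CmulZ SRmulE smul_expl [in RHS](mpolyE p) scaler_sumr.
apply: eq_bigr => al _; rewrite /C Cmono smul_mono smE fm_fix // addm0 scalerA.
by rewrite cc.
Qed.

Lemma expandR (p : R) : p = \sum_(al <- msupp p) C (p@_al) * 'X_[al].
Proof.
rewrite {1}(mpolyE p); apply: eq_bigr => al _; by rewrite CmulZ.
Qed.

Lemma Xpow al k : ('X_[al] : R) ^+ k = 'X_[(al *+ k)%MM].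
Proof.
elim: k => [|k IH]; first by rewrite expr0 mulm0n mpolyX0.
by rewrite exprS IH XmulX mulmS.
Qed.

Lemma iter_pow (a : R) k : iter k (sm a) 1 = a ^+ k.
Proof. by elim: k => [|k IH] //=; rewrite IH exprS. Qed.

End Basics.

Section Main.
Variable D : unitRingType.
Hypothesis HD : is_division_ring D.
Variable n : nat.
Variable sigma : 'I_n -> {rmorphism D -> D}.
Hypothesis Hc : pairwise_commuting (fun i => (sigma i : D -> D)).
Local Notation s := (fun i => (sigma i : D -> D)).
Local Notation R := (SR Hc).
Local Notation C := (@C D n sigma Hc).
Local Notation Fc := (fixed_center s).
Variable I : {mpoly D[n]} -> Prop.
Hypothesis HI : proper_twosided_ideal s I.
Variable tau : {rmorphism D -> D}.
Hypothesis Htau : forall c, Fc c -> tau c = c.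

Lemma I0 : I 0. Proof. by case: HI. Qed.
Lemma IB (x y : R) : I x -> I y -> I (x - y). Proof. by case: HI => _ h _ _ _; apply: h. Qed.
Lemma IML (r x : R) : I x -> I (r * x). Proof. by case: HI => _ _ h _ _; apply: h. Qed.
Lemma IMR (r x : R) : I x -> I (x * r). Proof. by case: HI => _ _ _ h _; apply: h. Qed.
Lemma I1 : ~ I (1 : R). Proof. by case: HI. Qed.
Lemma IN (x : R) : I x -> I (- x). Proof. by move=> h; rewrite -sub0r; apply: IB => //; exact: I0. Qed.
Lemma ID (x y : R) : I x -> I y -> I (x + y).
Proof. by move=> hx hy; rewrite -[y]opprK; apply: IB => //; apply: IN. Qed.
Lemma Isum (T : Type) (r : seq T) (F : T -> R) : (forall i, I (F i)) -> I (\sum_(i <- r) F i).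
Proof. by move=> h; elim: r => [|a r IH]; rewrite ?big_nil ?big_cons; [exact: I0|apply: ID]. Qed.
Lemma Ieq (x y : R) : x = y -> I (x - y). Proof. by move=> ->; rewrite subrr; exact: I0. Qed.

Lemma Fc1 : Fc 1. Proof. by split=> [y|i]; rewrite ?mul1r ?mulr1 ?rmorph1. Qed.
Lemma FcM a b : Fc a -> Fc b -> Fc (a * b).
Proof.
move=> [ha ha'] [hb hb']; split=> [y|i]; last by rewrite rmorphM ha' hb'.
by rewrite -mulrA hb mulrA ha mulrA.
Qed.
Lemma FcX a k : Fc a -> Fc (a ^+ k).
Proof. by move=> h; elim: k => [|k IH]; [exact: Fc1| rewrite exprS; apply: FcM]. Qed.

Section Gen.
Variable m : nat.
Variable z : 'I_m -> R.
Local Notation gen := (gen_subring s z).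
Lemma genC c : gen (C c). Proof. exact: gen_const. Qed.
Lemma gen0 : gen 0. Proof. by rewrite -(C0 Hc); apply: genC. Qed.
Lemma gen1 : gen 1. Proof. exact: (genC 1). Qed.
Lemma genD (x y : R) : gen x -> gen y -> gen (x + y). Proof. exact: gen_add. Qed.
Lemma genN (x : R) : gen x -> gen (- x). Proof. exact: gen_opp. Qed.
Lemma genB (x y : R) : gen x -> gen y -> gen (x - y). Proof. by move=> hx hy; apply: genD => //; apply: genN. Qed.
Lemma genM (x y : R) : gen x -> gen y -> gen (x * y). Proof. exact: gen_mul. Qed.
Lemma genX i : gen (z i). Proof. exact: gen_var. Qed.
Lemma genE (x : R) k : gen x -> gen (x ^+ k).
Proof. by move=> h; elim: k => [|k IH]; [exact: gen1| rewrite exprS; apply: genM]. Qed.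
Lemma gen_sum (T : Type) (r : seq T) (F : T -> R) : (forall i, gen (F i)) -> gen (\sum_(i <- r) F i).
Proof. by move=> h; elim: r => [|a r IH]; rewrite ?big_nil ?big_cons; [exact: gen0|apply: genD]. Qed.
End Gen.

Definition aut (y : R) := forall b, y * C b = C (tau b) * y.

Lemma autC_fix (c : D) (y : R) : Fc c -> aut y -> aut (C c * y).
Proof.
move=> hc hy b; by rewrite -mulrA hy mulrA -(mulC_fix _ hc) mulrA.
Qed.
Lemma autB (x y : R) : aut x -> aut y -> aut (x - y).
Proof. by move=> hx hy b; rewrite mulrBl mulrBr hx hy. Qed.

Section Mod.
Variable m' : nat.
Variable w : 'I_m' -> R.
Variable zm : R.
Hypothesis azm : aut zm.
Hypothesis czw : forall i, zm * w i = w i * zm.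
Local Notation gw := (gen_subring s w).

Lemma push (t : R) : gw t -> exists t' : R, gw t' /\ zm * t = t' * zm.
Proof.
elim=> [c|i|x y _ [x' [gx ex]] _ [y' [gy ey]]|x _ [x' [gx ex]]|x y _ [x' [gx ex]] _ [y' [gy ey]]].
- by exists (C (tau c)); split; [apply: genC| apply: azm].
- by exists (w i); split; [apply: genX| apply: czw].
- by exists (x' + y'); split; [apply: genD| rewrite mulrDr mulrDl ex ey].
- by exists (- x'); split; [apply: genN| rewrite mulrN mulNr ex].
- exists (x' * y'); split; first exact: genM.
  by rewrite -/(GRing.mul (x : R) y) mulrA ex -mulrA ey mulrA.
Qed.

Fixpoint Mod (K : nat) (v : R) : Prop :=
  match K with
  | 0 => v = 0
  | K.+1 => exists (t : R) (v' : R), [/\ gw t, Mod K v' & v = v' + t * zm ^+ K]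
  end.

Lemma Mod0 K : Mod K 0.
Proof.
elim: K => [|K IH] //=; exists 0, 0; split => //; first exact: gen0.
by rewrite mul0r addr0.
Qed.

Lemma ModD K v1 v2 : Mod K v1 -> Mod K v2 -> Mod K (v1 + v2).
Proof.
elim: K v1 v2 => [|K IH] v1 v2 /=; first by move=> -> ->; rewrite addr0.
move=> [t1 [u1 [g1 m1 ->]]] [t2 [u2 [g2 m2 ->]]].
exists (t1 + t2), (u1 + u2); split; [exact: genD| exact: IH|].
by rewrite mulrDl addrACA.
Qed.

Lemma ModN K v : Mod K v -> Mod K (- v).
Proof.
elim: K v => [|K IH] v /=; first by move=> ->; rewrite oppr0.
move=> [t [u [g m1 ->]]]; exists (- t), (- u); split; [exact: genN| exact: IH|].
by rewrite opprD mulNr.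
Qed.

Lemma ModB K v1 v2 : Mod K v1 -> Mod K v2 -> Mod K (v1 - v2).
Proof. by move=> h1 h2; apply: ModD => //; apply: ModN. Qed.

Lemma Mod_sum K (T : Type) (r : seq T) (F : T -> R) :
  (forall i, Mod K (F i)) -> Mod K (\sum_(i <- r) F i).
Proof. by move=> h; elim: r => [|a r IH]; rewrite ?big_nil ?big_cons; [exact: Mod0|apply: ModD]. Qed.

Lemma Mod_sum_in K (T : eqType) (r : seq T) (F : T -> R) :
  (forall i, i \in r -> Mod K (F i)) -> Mod K (\sum_(i <- r) F i).
Proof.
elim: r => [|a r IH] h; rewrite ?big_nil ?big_cons; first exact: Mod0.
apply: ModD; first by apply: h; rewrite mem_head.
by apply: IH => i hi; apply: h; rewrite in_cons hi orbT.
Qed.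

Lemma ModS K v : Mod K v -> Mod K.+1 v.
Proof.
by move=> h; exists 0, v; split => //; [exact: gen0| rewrite mul0r addr0].
Qed.

Lemma Mod_le K K' v : (K <= K')%N -> Mod K v -> Mod K' v.
Proof.
move=> le h; elim: K' le => [|K' IH]; first by rewrite leqn0 => /eqP <-.
rewrite leq_eqVlt => /orP[/eqP <- //|]; rewrite ltnS => le; apply: ModS; exact: IH.
Qed.

Lemma ModL K (t v : R) : gw t -> Mod K v -> Mod K (t * v).
Proof.
move=> gt; elim: K v => [|K IH] v /=; first by move=> ->; rewrite mulr0.
move=> [t1 [u [g m1 ->]]]; exists (t * t1), (t * u); split; [exact: genM| exact: IH|].
by rewrite mulrDr mulrA.
Qed.

Lemma Mod_term K k (t : R) : gw t -> (k < K)%N -> Mod K (t * zm ^+ k).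
Proof.
move=> gt; elim: K => [|K IH] //; rewrite ltnS leq_eqVlt => /orP[/eqP ->|lt].
  by exists t, 0; split => //; [exact: Mod0| rewrite add0r].
by apply: ModS; apply: IH.
Qed.

Lemma Mod_zm K v : Mod K v -> Mod K.+1 (zm * v).
Proof.
elim: K v => [|K IH] v /=.
  by move=> ->; exists 0, 0; split => //; [exact: gen0| rewrite mulr0 mul0r addr0].
move=> [t [u [g m1 ->]]].
have [t' [g' e']] := push g.
exists t', (zm * u); split => //; first exact: IH.
by rewrite mulrDr mulrA e' -mulrA -exprS.
Qed.

Lemma Mod_sumE K v : Mod K v -> exists h : nat -> R,
  (forall k, gw (h k)) /\ v = \sum_(k < K) h k * zm ^+ k.
Proof.
elim: K v => [|K IH] v /=.
  by move=> ->; exists (fun _ => 0); split; [move=> _; exact: gen0| rewrite big_ord0].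
move=> [t [u [g m1 ->]]]; have [h [gh ->]] := IH _ m1.
exists (fun k => if k == K then t else h k); split.
  by move=> k; case: (k == K).
rewrite big_ord_recr /= eqxx; congr (_ + _); apply: eq_bigr => i _.
by rewrite (ltn_eqF (ltn_ord i)).
Qed.

End Mod.

Section Step.
Variable m' : nat.
Variable z : 'I_m'.+1 -> R.
Hypothesis czz : forall i j, z i * z j = z j * z i.
Hypothesis az : forall i, aut (z i).
Variable mu : D.
Hypothesis Fmu : Fc mu.
Variable e : nat.

Local Notation zm := (z ord_max).
Definition lam (i : nat) : D := mu ^+ (e ^ i).
Lemma Flam i : Fc (lam i). Proof. exact: FcX. Qed.
Definition w (j : 'I_m') : R := z (widen_ord (leqnSn m') j) - C (lam j) * zm.
Local Notation gw := (gen_subring s w).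

Lemma commC c (x : R) : Fc c -> GRing.comm (C c) x.
Proof. by move=> h; rewrite /GRing.comm (mulC_fix _ h). Qed.

Lemma aw j : aut (w j).
Proof. apply: autB; first exact: az. apply: autC_fix; [exact: Flam| exact: az]. Qed.

Lemma czw' j : zm * w j = w j * zm.
Proof.
have: GRing.comm zm (w j); last by [].
apply: commrB; first exact: czz.
apply: commrM; [apply: commr_sym; apply: commC; exact: Flam| by []].
Qed.

Lemma cww i j : w i * w j = w j * w i.
Proof.
have: GRing.comm (w i) (w j); last by [].
apply: commrB; apply: commr_sym; apply: commrB.
- exact: czz.
- apply: commrM; [apply: commr_sym; apply: commC; exact: Flam| exact: czz].
- apply: commr_sym; apply: commrM; [apply: commr_sym; apply: commC; exact: Flam| exact: czz].
- apply: commrM; first by apply: commr_sym; apply: commC; exact: Flam.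
  apply: commr_sym; apply: commrM; [apply: commr_sym; apply: commC; exact: Flam| by []].
Qed.

Local Notation Mod := (Mod w zm).
Definition Exp K c (v : R) := Mod K (v - C c * zm ^+ K).

Lemma expMax K c v : Fc c -> Exp K c v -> Exp K.+1 c (zm * v).
Proof.
move=> hc h; rewrite /Exp.
have -> : zm * v - C c * zm ^+ K.+1 = zm * (v - C c * zm ^+ K).
  by rewrite mulrBr exprS [C c * _]mulrA -(mulC_fix _ hc) !mulrA.
exact: (Mod_zm (az ord_max) czw' h).
Qed.

Lemma zi_eq (i : 'I_m'.+1) (hi : (i < m')%N) :
  z i = w (Ordinal hi) + C (lam i) * zm.
Proof.
rewrite /w addrNK; congr (z _); exact: val_inj.
Qed.

Lemma expZ (i : 'I_m'.+1) K c v : (i < m')%N -> Fc c -> Exp K c v ->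
  Exp K.+1 (lam i * c) (z i * v).
Proof.
move=> hi hc h; rewrite /Exp (zi_eq hi).
have -> : (w (Ordinal hi) + C (lam i) * zm) * v - C (lam i * c) * zm ^+ K.+1 =
   w (Ordinal hi) * (v - C c * zm ^+ K) + (w (Ordinal hi) * C c) * zm ^+ K
   + C (lam i) * (zm * v - C c * zm ^+ K.+1).
  rewrite (CM Hc) mulrDl mulrBr mulrBr !mulrA.
  by rewrite subrK addrA.
apply: ModD; first apply: ModD.
- by apply: ModS; apply: ModL => //; exact: genX.
- by apply: Mod_term => //; apply: genM; [exact: genX| exact: genC].
- by apply: ModL; [exact: genC| exact: expMax].
Qed.

Lemma expMaxN b K c v : Fc c -> Exp K c v -> Exp (b + K) c (zm ^+ b * v).
Proof.
move=> hc h; elim: b => [|b IH]; first by rewrite expr0 mul1r.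
by rewrite exprS -mulrA addSn; apply: expMax.
Qed.

Lemma expZN (i : 'I_m'.+1) b K c v : (i < m')%N -> Fc c -> Exp K c v ->
  Exp (b + K) (lam i ^+ b * c) (z i ^+ b * v).
Proof.
move=> hi hc h; elim: b => [|b IH]; first by rewrite !expr0 !mul1r.
rewrite !exprS -!mulrA addSn; apply: expZ => //.
apply: FcM => //; apply: FcX; exact: Flam.
Qed.

Definition Gl (be : 'X_{1..m'.+1}) (l : seq 'I_m'.+1) : R :=
  foldr (fun i r => skew_mul s (iter (be i) (skew_mul s (z i)) 1) r) 1 l.

Definition El (be : 'X_{1..m'.+1}) (l : seq 'I_m'.+1) : nat :=
  \sum_(i <- l | i != ord_max) be i * e ^ i.

Lemma expGl (be : 'X_{1..m'.+1}) (l : seq 'I_m'.+1) : Exp (\sum_(i <- l) be i) (mu ^+ El be l) (Gl be l).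
Proof.
elim: l => [|i l IH].
  rewrite /Exp /El /Gl !big_nil /= expr0 mulr1 subrr.
  by [].
rewrite /Gl /= -/(Gl be l) iter_pow big_cons /El big_cons -/(El be l).
have hF : Fc (mu ^+ El be l) by exact: FcX.
case: (eqVneq i ord_max) => [->|ne] /=.
  exact: expMaxN.
have hi : (i < m')%N by move: ne (ltn_ord i); rewrite -val_eqE /= ltnS leq_eqVlt => /negbTE ->.
have := expZN (be i) hi hF IH.
by rewrite /lam -exprM -exprD mulnC.
Qed.


Definition Eb (be : 'X_{1..m'.+1}) := El be (enum 'I_m'.+1).

Lemma mono_exp (be : 'X_{1..m'.+1}) :
  Exp (mdeg be) (mu ^+ Eb be) (skew_monomial s z be).
Proof.
have := expGl be (enum 'I_m'.+1).
by rewrite big_enum /= mdegE.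
Qed.

Variable P : {mpoly D[m'.+1]}.
Definition Nd := \max_(b <- msupp P) mdeg b.
Definition coef := \sum_(b <- msupp P | mdeg b == Nd) P@_b * mu ^+ Eb b.
Definition Psum : R := \sum_(b <- msupp P) C (P@_b) * skew_monomial s z b.

Lemma C_sum (T : Type) (r : seq T) (Pr : pred T) (F : T -> D) :
  C (\sum_(i <- r | Pr i) F i) = \sum_(i <- r | Pr i) C (F i).
Proof. exact: (big_morph _ (CD Hc) (C0 Hc)). Qed.

Lemma poly_expand : Mod Nd (Psum - C coef * zm ^+ Nd).
Proof.
have -> : Psum - C coef * zm ^+ Nd = \sum_(b <- msupp P)
   (C (P@_b) * skew_monomial s z b - (if mdeg b == Nd then C (P@_b * mu ^+ Eb b) * zm ^+ Nd else 0)).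
  rewrite sumrB /Psum; congr (_ - _).
  rewrite -big_mkcond /= /coef (C_sum _ _ (fun b => P@_b * mu ^+ Eb b)) mulr_suml //.
apply: Mod_sum_in => b hb.
have hle : (mdeg b <= Nd)%N by rewrite /Nd (big_rem _ hb) /= leq_maxl.
have hE := mono_exp b.
case: (eqVneq (mdeg b) Nd) => [<-|ne].
  rewrite (CM Hc) -mulrA -mulrBr; apply: ModL => //; exact: genC.
rewrite subr0.
have -> : C (P@_b) * skew_monomial s z b = C (P@_b) * (skew_monomial s z b - C (mu ^+ Eb b) * zm ^+ mdeg b)
   + C (P@_b * mu ^+ Eb b) * zm ^+ mdeg b.
  by rewrite (CM Hc) mulrBr -mulrA subrK.
apply: ModD.
  by apply: (Mod_le hle); apply: ModL => //; exact: genC.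
by apply: Mod_term; [exact: genC| rewrite ltn_neqAle ne hle].
Qed.


Hypothesis IP : I Psum.
Hypothesis Hcoef : coef != 0.

Lemma rel_zm : exists g, Mod Nd g /\ I (zm ^+ Nd + g).
Proof.
have hu : coef \is a GRing.unit by exact: HD.
exists (C coef^-1 * (Psum - C coef * zm ^+ Nd)); split.
  by apply: ModL; [exact: genC| exact: poly_expand].
have := IML (C coef^-1) IP.
by rewrite mulrBr mulrA -(CM Hc) (mulVr hu) (C1 Hc) mul1r addrC subrK.
Qed.

Lemma Nd_gt0 : (0 < Nd)%N.
Proof.
have [g [hg hI]] := rel_zm; move: hg hI; case: Nd => [|//] /= ->.
by rewrite addr0 expr0 => /I1.
Qed.

Definition Qs (v : R) := exists v', Mod Nd v' /\ I (v - v').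

Lemma Qs_cong (a b : R) : Qs b -> I (a - b) -> Qs a.
Proof.
move=> [v' [hv hI]] hab; exists v'; split => //.
by have := ID hab hI; rewrite addrA subrK.
Qed.
Lemma Qs_Mod v : Mod Nd v -> Qs v.
Proof. by move=> h; exists v; split => //; rewrite subrr; exact: I0. Qed.
Lemma Qs_add a b : Qs a -> Qs b -> Qs (a + b).
Proof.
move=> [a' [ha hIa]] [b' [hb hIb]]; exists (a' + b'); split; first exact: ModD.
by have := ID hIa hIb; rewrite addrACA opprD.
Qed.
Lemma Qs_opp a : Qs a -> Qs (- a).
Proof.
move=> [a' [ha hIa]]; exists (- a'); split; first exact: ModN.
by have := IN hIa; rewrite opprB opprK addrC.
Qed.
Lemma Qs_L (t v : R) : gw t -> Qs v -> Qs (t * v).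
Proof.
move=> gt [v' [hv hI]]; exists (t * v'); split; first exact: ModL.
by have := IML t hI; rewrite mulrBr.
Qed.

Lemma Qs_zm v : Mod Nd v -> Qs (zm * v).
Proof.
have [g [hg hIg]] := rel_zm.
move: Nd_gt0 hg hIg; case E: Nd => [//|N] _ hg hIg /= [t [u [gt hu ->]]].
have [t' [gt' et]] := push (az ord_max) (@czw') gt.
rewrite mulrDr mulrA et -mulrA -exprS.
apply: Qs_add; first by apply: Qs_Mod; rewrite E; apply: (Mod_zm (az ord_max) czw').
apply: (@Qs_cong _ (- (t' * g))).
  by apply: Qs_Mod; rewrite E; apply: ModN; apply: ModL.
by rewrite opprK -mulrDr; apply: IML.
Qed.

Lemma Qs_zmQ v : Qs v -> Qs (zm * v).
Proof.
move=> [v' [hv hI]]; apply: (@Qs_cong _ (zm * v')); first exact: Qs_zm.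
by rewrite -mulrBr; apply: IML.
Qed.

Lemma Qs_gen (u : R) : gen_subring s z u -> forall v, Qs v -> Qs (u * v).
Proof.
elim=> [c|i|x y _ hx _ hy|x _ hx|x y _ hx _ hy] v hv.
- by apply: Qs_L => //; exact: genC.
- case: (eqVneq i ord_max) => [->|ne]; first exact: Qs_zmQ.
  have hi : (i < m')%N by move: ne (ltn_ord i); rewrite -val_eqE /= ltnS leq_eqVlt => /negbTE ->.
  rewrite (zi_eq hi) mulrDl; apply: Qs_add; first by apply: Qs_L => //; exact: genX.
  rewrite -mulrA; apply: Qs_L; [exact: genC| exact: Qs_zmQ].
- by rewrite mulrDl; apply: Qs_add; [apply: hx| apply: hy].
- by rewrite mulNr; apply: Qs_opp; apply: hx.
- by rewrite -/(GRing.mul (x : R) y) -mulrA; apply: hx; apply: hy.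
Qed.

Lemma step_fin (u : R) : gen_subring s z u ->
  exists t : 'I_Nd -> R, (forall k, gw (t k)) /\ I (u - \sum_(k < Nd) t k * zm ^+ k).
Proof.
move=> gu; have : Qs (u * 1).
  apply: Qs_gen => //; apply: Qs_Mod.
  by have := Mod_term (w:=w) zm (k := 0) (gen1 w) Nd_gt0; rewrite expr0 mulr1.
rewrite mulr1 => -[v' [hv hI]].
have [h [gh ev]] := Mod_sumE hv.
by exists (fun k => h k); split => //; rewrite -ev.
Qed.

End Step.
End Main.

Lemma max_attained (T : eqType) (r : seq T) (f : T -> nat) : r != [::] ->
  exists2 x, x \in r & f x = \max_(y <- r) f y.
Proof.
elim: r => [//|a r IH] _; rewrite big_cons.
case: (eqVneq r [::]) => [->|ne].
  by exists a; rewrite ?mem_head // big_nil maxn0.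
have [x xr <-] := IH ne.
case: (leqP (f a) (f x)) => h.
  by exists x; rewrite ?in_cons ?xr ?orbT // (maxn_idPr h).
by exists a; rewrite ?mem_head // (maxn_idPl (ltnW h)).
Qed.

Lemma digit_eq (e a b x y : nat) : (a < e)%N -> (b < e)%N -> (a + e * x = b + e * y)%N ->
  a = b /\ x = y.
Proof.
move=> ha hb h.
have hx : x = y.
  apply/eqP; rewrite eqn_leq; apply/andP; split; rewrite leqNgt; apply/negP => lt.
    have : (e * y.+1 <= e * x)%N by rewrite leq_mul2l lt orbT.
    by rewrite mulnS; lia.
  have : (e * x.+1 <= e * y)%N by rewrite leq_mul2l lt orbT.
  by rewrite mulnS; lia.
by subst; split => //; lia.
Qed.

Lemma digits e k (f g : 'I_k -> nat) : (forall j, f j < e)%N -> (forall j, g j < e)%N ->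
  (\sum_(j < k) f j * e ^ j = \sum_(j < k) g j * e ^ j)%N -> f =1 g.
Proof.
elim: k f g => [|k IH] f g hf hg; first by move=> _ [].
rewrite !big_ord_recl /= !expn0 !muln1.
have E (h : 'I_k.+1 -> nat) : (\sum_(i < k) h (lift ord0 i) * e ^ bump 0 i =
     e * \sum_(i < k) h (lift ord0 i) * e ^ i)%N.
  rewrite big_distrr /=; apply: eq_bigr => i _.
  by rewrite /bump /= add1n expnS mulnCA.
rewrite !E => /digit_eq [] // h0 hr.
have := IH (fun i => f (lift ord0 i)) (fun i => g (lift ord0 i)) (fun j => hf _) (fun j => hg _) hr.
move=> hl j; case: (unliftP ord0 j) => [j' ->|->] //.
Qed.

Lemma widen_neq_max m' (j : 'I_m') : widen_ord (leqnSn m') j != ord_max.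
Proof. by rewrite -val_eqE /= neq_ltn ltn_ord. Qed.

Lemma Eb_widen m' e (b : 'X_{1..m'.+1}) :
  Eb e b = (\sum_(j < m') b (widen_ord (leqnSn m') j) * e ^ j)%N.
Proof.
rewrite /Eb /El big_enum_cond /= big_mkcond big_ord_recr /= eqxx addn0.
by apply: eq_bigr => j _; rewrite widen_neq_max.
Qed.

Lemma mdeg_widen m' (b : 'X_{1..m'.+1}) :
  mdeg b = (\sum_(j < m') b (widen_ord (leqnSn m') j) + b ord_max)%N.
Proof. by rewrite mdegE big_ord_recr. Qed.

Lemma Eb_inj m' e (b b' : 'X_{1..m'.+1}) : (forall i, b i < e)%N -> (forall i, b' i < e)%N ->
  mdeg b = mdeg b' -> Eb e b = Eb e b' -> b = b'.
Proof.
move=> hb hb' hd he; rewrite !Eb_widen in he.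
have hw := digits (fun j => hb _) (fun j => hb' _) he.
have hs : (\sum_(j < m') b (widen_ord (leqnSn m') j) = \sum_(j < m') b' (widen_ord (leqnSn m') j))%N.
  by apply: eq_bigr => j _; rewrite hw.
move: hd; rewrite !mdeg_widen hs => /addnI hm.
apply/mnmP => i; case: (unliftP ord_max i) => [j ->|->] //.
have -> : lift ord_max j = widen_ord (leqnSn m') j by apply: val_inj; rewrite /= /bump leqNgt ltn_ord.
exact: hw.
Qed.

Lemma le_mdeg n (b : 'X_{1..n}) i : (b i <= mdeg b)%N.
Proof. by rewrite mdegE (bigD1 i) //= leq_addr. Qed.

Section Mu.
Variable D : unitRingType.
Hypothesis HD : is_division_ring D.
Variable n : nat.
Variable sigma : 'I_n -> {rmorphism D -> D}.
Local Notation s := (fun i => (sigma i : D -> D)).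
Local Notation Fc := (fixed_center s).
Hypothesis Finf : infinite_pred Fc.

Lemma Flist k : exists rs : seq D, [/\ uniq rs, size rs = k & forall x, x \in rs -> Fc x].
Proof.
elim: k => [|k [rs [ur sr hr]]]; first by exists [::].
case: (classic (exists x, Fc x /\ x \notin rs)) => [[x [hx nx]]|nex].
  exists (x :: rs); split => //=; first by rewrite nx.
    by rewrite sr.
  by move=> y; rewrite in_cons => /orP[/eqP ->//|]; apply: hr.
exfalso; apply: Finf; exists rs => x hx; apply/negPn/negP => nx; apply: nex; by exists x.
Qed.

Lemma uniq_roots_F rs : uniq rs -> (forall x, x \in rs -> Fc x) -> uniq_roots rs.
Proof.
elim: rs => [//|x rs IH] /= /andP[xn ur] h; apply/andP; split; last first.
  by apply: IH => // y hy; apply: h; rewrite in_cons hy orbT.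
apply/allP => y hy; rewrite /diff_roots; apply/andP; split.
  by have [hc _] := h x (mem_head _ _); rewrite hc.
apply: HD; rewrite subr_eq0; apply/eqP => eyx; move: xn; rewrite -eyx hy //.
Qed.

Lemma exists_mu m' (P : {mpoly D[m'.+1]}) : P != 0 ->
  exists mu, Fc mu /\ coef mu (Nd P).+1 P != 0.
Proof.
move=> hP; set N := Nd P; set e := N.+1.
have hle : forall b, b \in msupp P -> (mdeg b <= N)%N.
  by move=> b hb; rewrite /N /Nd (big_rem _ hb) /= leq_maxl.
have hbd : forall b, b \in msupp P -> forall i, (b i < e)%N.
  by move=> b hb i; rewrite ltnS; apply: leq_trans (le_mdeg b i) (hle b hb).
have [b0 hb0 hN] : exists2 b0, b0 \in msupp P & mdeg b0 = N.
  by apply: max_attained; rewrite msupp_eq0.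
pose q : {poly D} := \sum_(b <- msupp P | mdeg b == N) P@_b *: 'X^(Eb e b).
have hq : q`_(Eb e b0) = P@_b0.
  rewrite /q coef_sum big_seq_cond.
  rewrite (eq_bigr (fun b => if b == b0 then P@_b0 else 0)); last first.
    move=> b /andP[hb /eqP hbN]; rewrite coefZ coefXn.
    case: (eqVneq b b0) => [->|ne]; first by rewrite eqxx mulr1.
    case: (eqVneq (Eb e b0) (Eb e b)) => [he|]; last by rewrite mulr0.
    by exfalso; move/eqP: ne; apply; apply: Eb_inj (hbd _ hb) (hbd _ hb0) _ _; rewrite ?hbN ?hN.
  rewrite -big_mkcondr /= (eq_bigl (fun b => b == b0)); last first.
    by move=> b; case: (eqVneq b b0) => [->|]; rewrite ?andbT ?andbF // hb0 hN eqxx.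
  by rewrite -big_filter filter_pred1_uniq // big_seq1.
have qn0 : q != 0.
  by apply/eqP => q0; move: hb0; rewrite mcoeff_msupp -hq q0 coef0 eqxx.
have hhor : forall mu, Fc mu -> q.[mu] = coef mu e P.
  move=> mu hmu; rewrite /q horner_sum /coef; apply: eq_bigr => b _.
  by rewrite hornerZ hornerXn.
have [rs [ur sr hr]] := Flist (size q).
have := max_ring_poly_roots qn0 (rs := rs).
case: (boolP (all (root q) rs)) => [ha|].
  by move=> /(_ isT (uniq_roots_F ur hr)); rewrite sr ltnn.
move=> /allPn [mu hmu nr] _; exists mu; split; first exact: hr.
by move: nr; rewrite rootE hhor //; exact: hr.
Qed.
End Mu.

Section Norm.
Variable D : unitRingType.
Hypothesis HD : is_division_ring D.
Variable n : nat.
Variable sigma : 'I_n -> {rmorphism D -> D}.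
Hypothesis Hc : pairwise_commuting (fun i => (sigma i : D -> D)).
Local Notation s := (fun i => (sigma i : D -> D)).
Local Notation R := (SR Hc).
Local Notation C := (@C D n sigma Hc).
Local Notation Fc := (fixed_center s).
Variable I : {mpoly D[n]} -> Prop.
Hypothesis HI : proper_twosided_ideal s I.
Variable tau : {rmorphism D -> D}.
Hypothesis Finf : infinite_pred Fc.

Definition Fin (G H : R -> Prop) := exists (T : finType) (r : T -> R),
  forall u, H u -> exists t : T -> R, (forall j, G (t j)) /\ I (u - \sum_j t j * r j).

Lemma Fin_trans G1 G2 H : Fin G1 H -> Fin G2 G1 -> Fin G2 H.
Proof.
move=> [T1 [r1 h1]] [T2 [r2 h2]]; exists (T1 * T2)%type, (fun p => r2 p.2 * r1 p.1).
move=> u hu; have [t1 [g1 i1]] := h1 u hu.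
have ch := fun j => h2 _ (g1 j).
pose t2 j := proj1_sig (constructive_indefinite_description _ (ch j)).
have ht2 j : (forall k, G2 (t2 j k)) /\ I (t1 j - \sum_k t2 j k * r2 k).
  exact: (proj2_sig (constructive_indefinite_description _ (ch j))).
exists (fun p => t2 p.1 p.2); split; first by move=> [j k]; case: (ht2 j) => h _; apply: h.
have -> : \sum_(p : T1 * T2) t2 p.1 p.2 * (r2 p.2 * r1 p.1) =
          \sum_j (\sum_k t2 j k * r2 k) * r1 j.
  rewrite -(pair_big predT predT (fun j k => t2 j k * (r2 k * r1 j))) /=.
  by apply: eq_bigr => j _; rewrite mulr_suml; apply: eq_bigr => k _; rewrite mulrA.
have := ID HI i1 (Isum HI (index_enum T1) (fun j => IMR HI (r1 j) (proj2 (ht2 j)))).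
have E : \sum_j (t1 j - \sum_k t2 j k * r2 k) * r1 j =
   \sum_j t1 j * r1 j - \sum_j (\sum_k t2 j k * r2 k) * r1 j.
  by rewrite -sumrB; apply: eq_bigr => j _; rewrite mulrBl.
by rewrite E addrA subrK.
Qed.

Lemma Fin_refl G : Fin G G.
Proof.
exists 'I_1, (fun _ => 1) => u hu; exists (fun _ => u); split => //.
by rewrite big_ord1 mulr1 subrr; exact: I0 HI.
Qed.

Definition indep m (y : 'I_m -> {mpoly D[n]}) := forall P : {mpoly D[m]},
  I (\sum_(be <- msupp P) skew_mul s (P@_be)%:MP (skew_monomial s y be)) -> P = 0.

Lemma not_indep m (y : 'I_m -> {mpoly D[n]}) : ~ indep y -> exists P : {mpoly D[m]},
  P != 0 /\ I (\sum_(be <- msupp P) skew_mul s (P@_be)%:MP (skew_monomial s y be)).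
Proof.
move=> h; apply: NNPP => hn; apply: h => P hP; apply/eqP; apply: negbNE; apply/negP => nz.
by apply: hn; exists P.
Qed.

Lemma enum_ord0 : enum 'I_0 = [::].
Proof. by apply: size0nil; rewrite size_enum_ord. Qed.

Lemma normalize m (z : 'I_m -> R) :
  (forall i j, z i * z j = z j * z i) -> (forall i, aut tau (z i)) ->
  exists m' (y : 'I_m' -> R), [/\ (forall i j, y i * y j = y j * y i),
    (forall i, aut tau (y i)), indep y & Fin (gen_subring s y) (gen_subring s z)].
Proof.
elim: m z => [|m' IH] z czz az; case: (classic (indep z)) => [hind|hnind].
- by exists 0%N, z; split => //; exact: Fin_refl.
- exfalso; have [P [nP hP]] := not_indep hnind.
  move: nP hP; rewrite (nvar0_mpolyC P); set c := P@_0%MM.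
  rewrite mpolyC_eq0 => nc; rewrite msuppC (negbTE nc) big_seq1 mcoeffC eqxx mulr1.
  rewrite /skew_monomial enum_ord0 /= => hc.
  have := IML HI (C c^-1) hc; rewrite -[skew_mul _ _ _]/(C c * 1) mulr1 -(CM Hc) mulVr.
    by move/(I1 HI).
  exact: HD.
- by exists m'.+1, z; split => //; exact: Fin_refl.
have [P [nP hP]] := not_indep hnind.
have [mu [Fmu hco]] := exists_mu HD Finf nP.
have cw := cww czz Fmu (Nd P).+1.
have aw' := aw az Fmu (Nd P).+1.
have [m'' [y [cyy ay indy fy]]] := IH _ cw aw'.
exists m'', y; split => //.
apply: Fin_trans fy.
exists 'I_(Nd P), (fun k : 'I_(Nd P) => z ord_max ^+ k) => u hu.
exact: (step_fin HD HI czz az Fmu hP hco hu).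
Qed.
End Norm.

Section Top.
Variable D : unitRingType.
Hypothesis HD : is_division_ring D.
Variable n : nat.
Variable sigma : 'I_n -> {rmorphism D -> D}.
Hypothesis Hc : pairwise_commuting (fun i => (sigma i : D -> D)).
Local Notation s := (fun i => (sigma i : D -> D)).
Local Notation R := (SR Hc).
Local Notation C := (@C D n sigma Hc).
Local Notation Fc := (fixed_center s).
Hypothesis Finf : infinite_pred Fc.
Variable d : 'I_n -> nat.
Hypothesis dpos : forall i, (0 < d i)%N.
Variable tau : {rmorphism D -> D}.
Hypothesis Hd : forall i x, iter (d i) (sigma i) x = tau x.

Definition xv (j : 'I_n) : R := 'X_[(U_(j) *+ d j)%MM].

Lemma cxx i j : xv i * xv j = xv j * xv i.
Proof. by rewrite /xv !XmulX addmC. Qed.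

Lemma axv j : aut tau (xv j).
Proof.
move=> b; rewrite /xv XmulC smE fm_single count_uniq_mem ?enum_uniq // mem_enum muln1.
by rewrite Hd.
Qed.

Lemma gen_xsum (k : 'I_n -> nat) (l : seq 'I_n) :
  gen_subring s xv ('X_[(\sum_(i <- l) U_(i) *+ (d i * k i))%MM] : R).
Proof.
elim: l => [|i l IH]; first by rewrite big_nil mpolyX0; exact: gen1.
rewrite big_cons -(XmulX Hc); apply: genM => //.
have -> : ('X_[(U_(i) *+ (d i * k i))%MM] : R) = xv i ^+ k i.
  rewrite /xv Xpow; congr ('X_[_]); apply/mnmP => j; rewrite !mulmnE mulnA.
  by [].
exact: genE (genX _ _).
Qed.

Variable I : {mpoly D[n]} -> Prop.
Hypothesis HI : proper_twosided_ideal s I.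

Definition dM := (\max_i d i)%N.
Definition Tr := {ffun 'I_n -> 'I_dM.+1}.
Definition rgen (f : Tr) : R := 'X_[[multinom (f i : nat) | i < n]].
Definition fa (al : 'X_{1..n}) : Tr := [ffun i => inord (al i %% d i)].
Definition qd (al : 'X_{1..n}) : 'X_{1..n} :=
  (\sum_(i <- enum 'I_n) U_(i) *+ (d i * (al i %/ d i)))%MM.

Lemma decomp al : al = (qd al + [multinom (fa al i : nat) | i < n])%MM.
Proof.
apply/mnmP => j; rewrite mnmDE mnmE ffunE inordK; last first.
  rewrite ltnS; apply: leq_trans (ltnW (ltn_pmod _ (dpos j))) _.
  by rewrite /dM (bigD1 j) //= leq_maxl.
rewrite /qd mnm_sumE big_enum /= (bigD1 j) //= big1; last first.
  by move=> i ne; rewrite mulmnE mnm1E (negbTE ne) mul0n.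
by rewrite mulmnE mnm1E eqxx mul1n addn0 mulnC -divn_eq.
Qed.

Lemma Fin_x : Fin (Hc:=Hc) I (gen_subring s xv) (fun _ => True).
Proof.
exists Tr, rgen => u _.
pose t (f : Tr) : R := \sum_(al <- msupp u | fa al == f) C (u@_al) * 'X_[qd al].
exists t; split.
  move=> f; rewrite /t -big_filter; apply: gen_sum => al; apply: genM; first exact: genC.
  exact: (gen_xsum (fun i => (al i %/ d i)%N) (enum 'I_n)).
have -> : \sum_f t f * rgen f = u.
  rewrite /t.
  under eq_bigr => f _ do rewrite mulr_suml.
  rewrite (exchange_big_dep predT) //= [RHS](expandR u); apply: eq_bigr => al _.
  rewrite (eq_bigl (fun f => f == fa al)); last by move=> f; rewrite eq_sym.
  by rewrite big_pred1_eq -mulrA /rgen XmulX -decomp.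
by rewrite subrr; exact: I0 HI.
Qed.


Lemma top_norm (central : bool) : bijective tau -> (central -> forall x, tau x = x) ->
  normalizable_quot central s I.
Proof.
move=> Hbij Hcen.
have [m [y [cyy ay indy fy]]] := normalize HD HI Finf cxx axv.
have [T [r hr]] := Fin_trans HI Fin_x fy.
exists m, y, (fun _ => tau); split.
- by split => // i j x.
- by move=> hc i x; exact: Hcen.
- split => [i j|i b]; apply: (Ieq HI); [exact: cyy | exact: ay].
- exact: indy.
exists #|T|, (fun i => r (enum_val i)) => x.
have [t [gt hI]] := hr x Logic.I.
exists (fun i => t (enum_val i)); split => //.
by rewrite -(big_enum_val (A := T) (fun j => t j * r j)).
Qed.

End Top.

Lemma rpow_bij (D : unitRingType) (f : {rmorphism D -> D}) k : bijective f -> bijective (rpow f k).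
Proof.
move=> hf; elim: k => [|k IH] /=; first by exists id.
exact: bij_comp.
Qed.

Lemma iter_fix (T : Type) (g : T -> T) r x : (forall y, g y = y) -> iter r g x = x.
Proof. by move=> h; elim: r => //= r ->; rewrite h. Qed.

Unset Implicit Arguments.
Theorem corollary3p8 (D : unitRingType) (n : nat)
  (sigma : 'I_n -> {rmorphism D -> D}) :
  is_division_ring D ->
  (forall i, is_ring_aut (sigma i)) ->
  pairwise_commuting (fun i => (sigma i : D -> D)) ->
  infinite_pred (fixed_center (fun i => (sigma i : D -> D))) ->
  ((exists d : 'I_n -> nat, (forall i, (0 < d i)%N) /\
       (forall i j (x : D), iter (d i) (sigma i) x = iter (d j) (sigma j) x)) ->
     tuple_aut_normalizable (fun i => (sigma i : D -> D)))
  /\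
  ((forall i, exists k : nat, (0 < k)%N /\ forall x : D, iter k (sigma i) x = x) ->
     tuple_central_normalizable (fun i => (sigma i : D -> D))).
Proof.
move=> HD Haut Hc Finf; split.
  move=> [d [dpos dH]] I HI.
  pose tau : {rmorphism D -> D} :=
    if [pick i : 'I_n] is Some i then rpow (sigma i) (d i) else (idfun : {rmorphism D -> D}).
  have Hd : forall i x, iter (d i) (sigma i) x = tau x.
    move=> i x; rewrite /tau; case: pickP => [i0 _|h]; last by move: (h i).
    by rewrite rpowE (dH i i0).
  have Hb : bijective tau.
    rewrite /tau; case: pickP => [i0 _|_]; first exact: rpow_bij (Haut i0).
    by exists id.
  exact: (top_norm HD Hc Finf dpos Hd HI (central := false) Hb (fun h => match h with end)).
move=> hk I HI.
have [kf hkf] := fin_all_exists hk.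
pose K := (\prod_i kf i)%N.
have dpos : forall i : 'I_n, (0 < (fun _ => K) i)%N.
  by move=> i; rewrite prodn_gt0 // => j; case: (hkf j).
have Hd : forall i x, iter ((fun _ => K) i) (sigma i) x = (idfun : {rmorphism D -> D}) x.
  move=> i x /=; rewrite /K (bigD1 i) //= mulnC iterM.
  by apply: iter_fix => y; case: (hkf i) => _ ->.
have Hb : bijective (idfun : {rmorphism D -> D}) by exists id.
exact: (top_norm HD Hc Finf dpos Hd HI (central := true) Hb (fun _ _ => erefl)).
Qed.
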